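(* Let $n\ge 1$, let $\rho$ be an $n\times n$ correlation matrix, let $u=(u_1,\ldots,u_n)\in\mathbb{R}^n$ be arbitrary and let $\kappa\in\{0,1\}$. Define the $n\times n$ matrix $\hat\rho$ by \[ \hat{\rho}_{ij} = \begin{cases} \dfrac{\rho_{ij}+\kappa u_iu_j}{\sqrt{(1+u_i^2)(1+u_j^2)}}, & i\neq j,\\[2mm] 1, & i=j. \end{cases} \] Then $\hat\rho$ is a correlation matrix.
   Context: An $n\times n$ real matrix $C$ is called a correlation matrix if (i) $C$ is positive semi-definite, i.e. $v^T C v\ge 0$ for all $v\in\mathbb{R}^n$, and (ii) all diagonal entries equal one, $C_{ii}=1$ for $i=1,\ldots,n$. *)

(* Defs.v *)
From mathcomp Require Import all_boot all_order all_algebra.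
Set Implicit Arguments. Unset Strict Implicit. Unset Printing Implicit Defensive.
Import Order.TTheory GRing.Theory Num.Theory.
Local Open Scope ring_scope.

Definition psd (R : realFieldType) (n : nat) (C : 'M[R]_n) : Prop :=
  forall v : 'cV[R]_n, 0 <= (v^T *m C *m v) 0 0.

Definition correlation_matrix (R : realFieldType) (n : nat) (C : 'M[R]_n) : Prop :=
  psd C /\ forall i : 'I_n, C i i = 1.

Definition rho_hat (R : rcfType) (n : nat) (rho : 'M[R]_n) (u : 'cV[R]_n)
  (kappa : R) : 'M[R]_n :=
  \matrix_(i, j) (if i == j then 1
                  else (rho i j + kappa * u i 0 * u j 0) /
                       Num.sqrt ((1 + u i 0 ^+ 2) * (1 + u j 0 ^+ 2))).

(* Main.v *)
Require Import Defs.
From mathcomp Require Import all_boot all_order all_algebra.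
From mathcomp Require Import ring lra.
Import Order.TTheory GRing.Theory Num.Theory.
Local Open Scope ring_scope.

Lemma qfE (R : realFieldType) (n : nat) (C : 'M[R]_n) (v : 'cV[R]_n) :
  (v^T *m C *m v) 0 0 = \sum_i \sum_j v i 0 * C i j * v j 0.
Proof.
rewrite mxE exchange_big /=; apply: eq_bigr => j _.
rewrite mxE big_distrl /=; apply: eq_bigr => i _.
by rewrite mxE.
Qed.

Theorem lemma1 (R : rcfType) (n : nat) (hn : (1 <= n)%N) (rho : 'M[R]_n)
  (u : 'cV[R]_n) (kappa : R) :
  correlation_matrix rho -> (kappa = 0 \/ kappa = 1) ->
  correlation_matrix (rho_hat rho u kappa).
Proof.
move=> [Hpsd Hdiag] Hk.
have k0 : 0 <= kappa by case: Hk => ->; lra.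
have k1 : 0 <= 1 - kappa by case: Hk => ->; lra.
split; last by move=> i; rewrite mxE eqxx.
move=> v.
pose s i := Num.sqrt (1 + u i 0 ^+ 2).
have spos : forall i, 0 < s i.
  by move=> i; rewrite sqrtr_gt0; have := sqr_ge0 (u i 0); lra.
have ssq : forall i, s i ^+ 2 = 1 + u i 0 ^+ 2.
  by move=> i; rewrite sqr_sqrtr //; have := sqr_ge0 (u i 0); lra.
pose w := \col_i (v i 0 / s i).
have key : forall i j, v i 0 * rho_hat rho u kappa i j * v j 0 =
   w i 0 * rho i j * w j 0 + kappa * ((w i 0 * u i 0) * (w j 0 * u j 0))
   + w i 0 * ((i == j)%:R * ((1 - kappa) * u i 0 ^+ 2)) * w j 0.
  move=> i j; rewrite !mxE.
  have si := spos i; have sj := spos j.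
  case: eqP => [<-|/eqP ij].
    rewrite Hdiag.
    have: (v i 0 * 1 * v i 0) = (v i 0 / s i) ^+2 * s i ^+ 2.
      by field; rewrite gt_eqF.
    by move=> ->; rewrite ssq mul1r; ring.
  rewrite sqrtrM; last by have := sqr_ge0 (u i 0); lra.
  rewrite -/(s i) -/(s j).
  rewrite mul0r mulr0 mul0r addr0.
  by field; rewrite !gt_eqF.
rewrite qfE.
under eq_bigr => i _ do under eq_bigr => j _ do rewrite key.
rewrite (eq_bigr (fun i => \sum_j (w i 0 * rho i j * w j 0
   + kappa * ((w i 0 * u i 0) * (w j 0 * u j 0)))
   + \sum_j w i 0 * ((i == j)%:R * ((1 - kappa) * u i 0 ^+ 2)) * w j 0));
  last by move=> i _; rewrite big_split.
rewrite big_split /=.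
apply: addr_ge0; last first.
  apply: sumr_ge0 => i _; apply: sumr_ge0 => j _.
  case: eqP => [<-|_]; last by rewrite mul0r mulr0 mul0r.
  rewrite mul1r mulrC mulrA -expr2; apply: mulr_ge0; first exact: sqr_ge0.
  by apply: mulr_ge0 => //; exact: sqr_ge0.
rewrite (eq_bigr (fun i => \sum_j w i 0 * rho i j * w j 0
   + \sum_j kappa * ((w i 0 * u i 0) * (w j 0 * u j 0))));
  last by move=> i _; rewrite big_split.
rewrite big_split /= -qfE; apply: addr_ge0; first exact: Hpsd.
have -> : \sum_i \sum_j kappa * ((w i 0 * u i 0) * (w j 0 * u j 0))
  = kappa * (\sum_i w i 0 * u i 0) ^+ 2.
  rewrite expr2 mulr_suml mulr_sumr; apply: eq_bigr => i _.
  rewrite mulr_sumr mulr_sumr; apply: eq_bigr => j _; ring.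
by apply: mulr_ge0 => //; exact: sqr_ge0.
Qed.
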